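(* Let $n$ and $k$ be even integers with $1\le k<n/2$, $\gcd(n,k)=2$ and $4\nmid n$. Then (a) $\lambda\in A(n,k)$ if and only if $k^2\equiv1\pmod{n/2}$; (b) $\tau\in A(n,k)$ if and only if $k^2\equiv-1\pmod{n/2}$. Moreover, if $\lambda\in A(n,k)$ then $\lambda\in B(n,k)$, and if $\tau\in A(n,k)$ then $\tau\in B(n,k)$.
   Context: $\mathrm{DGP}(n,k)$ ($1\le k<n/2$) is the graph with vertex set $\{(u_i,j),(v_i,j): 0\le i\le n-1,\ j\in\{0,1\}\}$ and edges $\{(u_i,j),(u_{i+1},1-j)\}$, $\{(u_i,j),(v_i,1-j)\}$ (spokes, forming the set $\mathcal{S}$), $\{(v_i,j),(v_{i+k},1-j)\}$, subscripts mod $n$ (the canonical double cover of the generalized Petersen graph $\mathrm{GP}(n,k)$). $A(n,k)$ is its automorphism group and $B(n,k)$ the setwise stabilizer of $\mathcal{S}$ in $A(n,k)$. Define permutations $\lambda,\tau$ of the vertex set (subscripts mod $n$; $n$ even so parity of $i+j$ is well defined): if $i+j$ is odd, $(u_i,j)^\lambda=(v_{1+(i-k)k},j)$, $(v_i,j)^\lambda=(u_{ik},j)$; if $i+j$ is even, $(u_i,j)^\lambda=(v_{ik},j)$, $(v_i,j)^\lambda=(u_{1+(i-k)k},j)$. Similarly, if $i+j$ is odd, $(u_i,j)^\tau=(v_{-1+(i-k)k},j)$, $(v_i,j)^\tau=(u_{ik},j)$; if $i+j$ is even, $(u_i,j)^\tau=(v_{ik},j)$, $(v_i,j)^\tau=(u_{-1+(i-k)k},j)$.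 *)

(* Defs.v *)
From mathcomp Require Import all_boot.
Set Implicit Arguments. Unset Strict Implicit. Unset Printing Implicit Defensive.

(* Vertices of DGP(n,k): inl (i,j) is (u_i, j), inr (i,j) is (v_i, j);
   j : bool encodes j in {0,1} (false = 0, true = 1). *)
Definition vertex (n : nat) := (('I_n * bool) + ('I_n * bool))%type.

(* Reduction of a natural number mod n, as an element of 'I_n
   (the witness i : 'I_n guarantees n > 0). *)
Definition zmod (n : nat) (i : 'I_n) (m : nat) : 'I_n :=
  Ordinal (ltn_pmod m (leq_ltn_trans (leq0n i) (ltn_ord i))).

Definition dgp_adj (n k : nat) (x y : vertex n) : bool :=
  match x, y with
  | inl (i, j), inl (i', j') =>
      (j' == ~~ j) && ((val i' == (i + 1) %% n) || (val i == (i' + 1) %% n))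
  | inl (i, j), inr (i', j') => (i == i') && (j' == ~~ j)
  | inr (i, j), inl (i', j') => (i == i') && (j' == ~~ j)
  | inr (i, j), inr (i', j') =>
      (j' == ~~ j) && ((val i' == (i + k) %% n) || (val i == (i' + k) %% n))
  end.

Definition is_spoke (n k : nat) (x y : vertex n) : bool :=
  dgp_adj k x y &&
  match x, y with
  | inl _, inr _ | inr _, inl _ => true
  | _, _ => false
  end.

Definition in_A (n k : nat) (f : vertex n -> vertex n) : Prop :=
  bijective f /\ forall x y, dgp_adj k (f x) (f y) = dgp_adj k x y.

Definition in_B (n k : nat) (f : vertex n -> vertex n) : Prop :=
  in_A k f /\ forall x y, is_spoke k (f x) (f y) = is_spoke k x y.

(* lambda; i - k is computed as i + n - k (k < n), so (i-k)k mod n is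
   ((i + n - k) * k) mod n. *)
Definition lam (n k : nat) (x : vertex n) : vertex n :=
  match x with
  | inl (i, j) =>
      if odd (i + j) then inr (zmod i (1 + (i + n - k) * k), j)
      else inr (zmod i (i * k), j)
  | inr (i, j) =>
      if odd (i + j) then inl (zmod i (i * k), j)
      else inl (zmod i (1 + (i + n - k) * k), j)
  end.

(* tau; -1 + m is computed as m + (n - 1) mod n. *)
Definition tau (n k : nat) (x : vertex n) : vertex n :=
  match x with
  | inl (i, j) =>
      if odd (i + j) then inr (zmod i ((i + n - k) * k + (n - 1)), j)
      else inr (zmod i (i * k), j)
  | inr (i, j) =>
      if odd (i + j) then inl (zmod i (i * k), j)
      else inl (zmod i ((i + n - k) * k + (n - 1)), j)
  end.

(* Main.v *)
Require Import Defs.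
From mathcomp Require Import all_boot.
From mathcomp Require Import zify.
Set Implicit Arguments. Unset Strict Implicit. Unset Printing Implicit Defensive.

Definition gmap (n k c : nat) (x : vertex n) : vertex n :=
  match x with
  | inl (i, j) => inr (zmod i (i * k + (if odd (i + j) then c else 0)), j)
  | inr (i, j) => inl (zmod i (i * k + (if odd (i + j) then 0 else c)), j)
  end.

Lemma edge_back (T : finType) (e : rel T) (f : T -> T) :
  injective f -> (forall x y, e x y -> e (f x) (f y)) ->
  forall x y, e (f x) (f y) = e x y.
Proof.
move=> finj fe x y.
pose E := [set p : T * T | e p.1 p.2].
pose F := fun p : T * T => (f p.1, f p.2).
have Finj : injective F.
  by move=> [a b] [a' b'] [] /finj -> /finj ->.
have FE : F @: E = E.
  apply/eqP; rewrite eqEcard card_imset // leqnn andbT.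
  apply/subsetP => p /imsetP [q Hq ->].
  by move: Hq; rewrite !inE /= => /fe.
apply/idP/idP; last exact: fe.
move=> H.
have : F (x, y) \in E by rewrite inE.
rewrite -FE => /imsetP [q Hq /Finj Eq].
by move: Hq; rewrite -Eq inE.
Qed.

Lemma oddNb (a : nat) (j : bool) : odd (a + ~~ j) = ~~ odd (a + j).
Proof. by case: j; rewrite ?addn0 ?addn1 //= negbK. Qed.

Lemma odd_modn (n a : nat) : ~~ odd n -> odd (a %% n) = odd a.
Proof. by move=> H; rewrite odd_mod //; apply/negbTE. Qed.

Lemma adj_ll_z n k (i i' : 'I_n) a b j j' :
  dgp_adj k (inl (zmod i a, j)) (inl (zmod i' b, j')) =
  (j' == ~~ j) && ((b == a + 1 %[mod n]) || (a == b + 1 %[mod n])).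
Proof. by rewrite /dgp_adj /= !modnDml. Qed.

Lemma adj_rr_z n k (i i' : 'I_n) a b j j' :
  dgp_adj k (inr (zmod i a, j)) (inr (zmod i' b, j')) =
  (j' == ~~ j) && ((b == a + k %[mod n]) || (a == b + k %[mod n])).
Proof. by rewrite /dgp_adj /= !modnDml. Qed.

Lemma dgp_sym n k (x y : vertex n) : dgp_adj k x y = dgp_adj k y x.
Proof.
case: x y => [[i j]|[i j]] [[i' j']|[i' j']] /=;
  rewrite ?(eq_sym i) ?(orbC (val i' == _));
  by case: j j' => [] [].
Qed.


Lemma L1 n k c i i' (e e' : bool) : ~~ odd n -> ~~ odd k -> odd c ->
  i * k + (if e then c else 0) = i' * k + (if e' then c else 0) %[mod n] ->
  e = e'.
Proof.
move=> Hn Hk Hc H.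
have := congr1 odd H; rewrite !odd_modn // !oddD !oddM (negbTE Hk) !andbF.
by clear H; case: e; case: e'; rewrite /= ?Hc.
Qed.

Lemma L2 n m k i i' : n = 2 * m -> coprime m k -> i < n -> i' < n ->
  odd i = odd i' -> i * k = i' * k %[mod n] -> i = i'.
Proof.
move=> Hnm Hcop.
wlog le : i i' / i' <= i.
  move=> W Hi Hi' Ho Hm; case: (leqP i' i) => h; first exact: W.
  by symmetry; apply: W => //; apply: ltnW.
move=> Hi Hi' Ho /eqP; rewrite eqn_mod_dvd ?leq_mul2r ?le ?orbT // -mulnBl.
have Hev : ~~ odd (i - i') by rewrite oddB // Ho addbb.
have := odd_double_half (i - i'); rewrite (negbTE Hev) add0n => Hd.
rewrite -Hd Hnm -muln2 (mulnC _ 2) -mulnA dvdn_pmul2l // Gauss_dvdl // => Hmd.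
have : n %| i - i' by rewrite -Hd Hnm -mul2n dvdn_pmul2l.
move=> Hdv.
case: (posnP (i - i')) => h; first lia.
have := dvdn_leq h Hdv; lia.
Qed.


Lemma ifswap (b : bool) (c : nat) : (if b then 0 else c) = (if ~~ b then c else 0).
Proof. by case: b. Qed.

Lemma gmap_inj n m k c : ~~ odd n -> n = 2 * m -> coprime m k -> ~~ odd k ->
  odd c -> injective (@gmap n k c).
Proof.
move=> Hn Hnm Hcop Hk Hc.
have oddeq : forall (i i' : 'I_n) (j : bool), odd (i + j) = odd (i' + j) ->
   odd i = odd i'.
  by move=> i i' j; rewrite !oddD; case: j => /=; rewrite ?addbT ?addbF; [move/negb_inj|].
case=> [[i j]|[i j]] [[i' j']|[i' j']] //= [] H Ej; subst j'.
- have He := L1 Hn Hk Hc H.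
  rewrite He in H.
  suff -> : i = i' by [].
  apply/val_inj; apply: (L2 Hnm Hcop (ltn_ord i) (ltn_ord i')).
  + exact: (oddeq _ _ j He).
  + apply/eqP; move/eqP: H; rewrite eqn_modDr; exact: id.
- move: (H); rewrite !ifswap => /(L1 Hn Hk Hc) /negb_inj He'.
  rewrite He' in H.
  suff -> : i = i' by [].
  apply/val_inj; apply: (L2 Hnm Hcop (ltn_ord i) (ltn_ord i')).
  + exact: (oddeq _ _ j He').
  + apply/eqP; move/eqP: H; rewrite eqn_modDr; exact: id.
Qed.

Lemma modD_congr n a b x : a = b %[mod n] -> a + x = b + x %[mod n].
Proof. by move=> H; rewrite -modnDml H modnDml. Qed.

Lemma modDl_eq n a b x y : a = b %[mod n] -> (a + x == y %[mod n]) = (b + x == y %[mod n]).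
Proof. by move=> H; rewrite -modnDml H modnDml. Qed.

Lemma modDr_eq n a b x y : a = b %[mod n] -> (y == a + x %[mod n]) = (y == b + x %[mod n]).
Proof. by move=> H; rewrite -(modnDml a) H modnDml. Qed.

Lemma gmap_fwd n k c : ~~ odd n -> ~~ odd k -> k < n ->
  (c + k * k == 1 %[mod n]) || (c + k * k + 1 == 0 %[mod n]) ->
  (k * k == c + 1 %[mod n]) || (c == k * k + 1 %[mod n]) ->
  forall x y, dgp_adj k x y -> dgp_adj k (@gmap n k c x) (@gmap n k c y).
Proof.
move=> Hn Hk Hkn HD HC.
have oddS : forall (i i' : 'I_n), val i' = (i + 1) %% n -> odd i' = ~~ odd i.
  by move=> i i' ->; rewrite odd_modn // addn1 /=.
have oddK : forall (i i' : 'I_n), val i' = (i + k) %% n -> odd i' = odd i.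
  by move=> i i' ->; rewrite odd_modn // oddD (negbTE Hk) addbF.
have eu : forall (i i' : 'I_n) j, val i' = (i + 1) %% n ->
    dgp_adj k (@gmap n k c (inl (i, j))) (@gmap n k c (inl (i', ~~ j))).
  move=> i i' j Hi; rewrite /= !modnDml eqxx /=.
  have -> : odd (i' + ~~ j) = odd (i + j).
    by rewrite oddNb !oddD (oddS _ _ Hi); case: (odd i); case: j.
  apply/orP; left; rewrite -addnA (addnC _ k) addnA eqn_modDr Hi.
  by rewrite modnMml mulnDl mul1n.
have ev : forall (i i' : 'I_n) j, val i' = (i + k) %% n ->
    dgp_adj k (@gmap n k c (inr (i, j))) (@gmap n k c (inr (i', ~~ j))).
  move=> i i' j Hi; rewrite /= !modnDml eqxx /=.
  have -> : odd (i' + ~~ j) = ~~ odd (i + j).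
    by rewrite oddNb !oddD (oddK _ _ Hi).
  have Hik : i' * k = i * k + k * k %[mod n].
    by rewrite Hi modnMml mulnDl.
  case: (odd (i + j)) => /=.
  - rewrite -!addnA (modDl_eq _ _ Hik) (modDr_eq _ _ Hik) -!addnA !eqn_modDl add0n.
    move: HD; rewrite (addnC c) addnA; case/orP => H; apply/orP; [left|right] => //.
    by rewrite eq_sym.
  - rewrite -!addnA (modDl_eq _ _ Hik) (modDr_eq _ _ Hik) -!addnA !eqn_modDl addn0 add0n.
    exact: HC.
case=> [[i j]|[i j]] [[i' j']|[i' j']] H0; have /= H1 := H0; clear H0; move: H1.
- case/andP => /eqP Ej /orP [] /eqP H; first by rewrite Ej; exact: (eu _ _ _ H).
  have E2 : j = ~~ j' by rewrite Ej negbK.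
  rewrite E2; have := eu _ _ j' H; rewrite dgp_sym; exact: id.
- case/andP => /eqP <- /eqP -> /=; rewrite !eqxx /= andbT; apply/eqP/val_inj => /=.
  by rewrite oddNb; case: (odd _).
- case/andP => /eqP <- /eqP -> /=; rewrite !eqxx /= andbT; apply/eqP/val_inj => /=.
  by rewrite oddNb; case: (odd _).
- case/andP => /eqP Ej /orP [] /eqP H; first by rewrite Ej; exact: (ev _ _ _ H).
  have E2 : j = ~~ j' by rewrite Ej negbK.
  rewrite E2; have := ev _ _ j' H; rewrite dgp_sym; exact: id.
Qed.


Lemma gmap_A n m k c : ~~ odd n -> n = 2 * m -> coprime m k -> ~~ odd k -> k < n ->
  odd c -> (c + k * k == 1 %[mod n]) || (c + k * k + 1 == 0 %[mod n]) ->
  (in_A k (@gmap n k c) <-> (k * k == c + 1 %[mod n]) || (c == k * k + 1 %[mod n])).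
Proof.
move=> Hn Hnm Hcop Hk Hkn Hc HD; split.
- case=> _ H.
  have Hn0 : 0 < n by apply: leq_ltn_trans Hkn.
  have := H (inr (Ordinal Hn0, false)) (inr (Ordinal Hkn, true)).
  rewrite /= add0n (modn_small Hkn) eqxx /= addn1 /= (negbTE Hk) /= mul0n add0n addn0 !modnDml.
  by move=> ->.
- move=> HC; have Hinj := gmap_inj Hn Hnm Hcop Hk Hc.
  split; first exact: injF_bij.
  exact: edge_back Hinj (gmap_fwd Hn Hk Hkn HD HC).
Qed.

Lemma gmap_B n k c : in_A k (@gmap n k c) -> in_B k (@gmap n k c).
Proof.
move=> HA; split => // x y; rewrite /is_spoke HA.2.
by case: x y => [[i j]|[i j]] [[i' j']|[i' j']].
Qed.

Lemma in_A_ext n k (f g : vertex n -> vertex n) : f =1 g -> in_A k f <-> in_A k g.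
Proof.
move=> E; rewrite /in_A; split=> [[[h fh hf] H]|[[h gh hg] H]]; split.
- by exists h => x; rewrite -E.
- by move=> x y; rewrite -!E.
- by exists h => x; rewrite E.
- by move=> x y; rewrite !E.
Qed.

Lemma in_B_ext n k (f g : vertex n -> vertex n) : f =1 g -> in_B k f <-> in_B k g.
Proof.
move=> E; rewrite /in_B (in_A_ext k E); split=> [[H1 H2]|[H1 H2]]; split=> // x y.
- by rewrite -!E.
- by rewrite !E.
Qed.



Lemma lam_g n k : k <= n -> @lam n k =1 @gmap n k ((n - k) * k + 1).
Proof.
move=> Hkn [[i j]|[i j]] /=; case: ifP => _; do 2 f_equal; apply/val_inj => /=;
  rewrite ?addn0 //; congr (_ %% n); rewrite -addnBA // mulnDl; lia.
Qed.

Lemma tau_g n k : k <= n -> @tau n k =1 @gmap n k ((n - k) * k + (n - 1)).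
Proof.
move=> Hkn [[i j]|[i j]] /=; case: ifP => _; do 2 f_equal; apply/val_inj => /=;
  rewrite ?addn0 //; congr (_ %% n); rewrite -addnBA // mulnDl; lia.
Qed.

Lemma two_mod m a b : (2 * a == 2 * b %[mod 2 * m]) = (a == b %[mod m]).
Proof. by rewrite -!muln_modr eqn_pmul2l. Qed.

Lemma nodiv m k : coprime m k -> 0 < k -> k < m -> (k * k == 0 %[mod m]) = false.
Proof.
move=> Hc Hk Hkm; rewrite mod0n -/(dvdn m (k * k)) Gauss_dvdl //.
by apply/negbTE; apply/negP => /(dvdn_leq Hk); rewrite leqNgt Hkm.
Qed.

Unset Implicit Arguments.

Theorem lemma5p3 (n k : nat) :
  ~~ odd n -> ~~ odd k -> 1 <= k -> k < n./2 -> gcdn n k = 2 -> ~~ (4 %| n) ->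
  (in_A k (@lam n k) <-> k ^ 2 = 1 %[mod n./2]) /\
  (in_A k (@tau n k) <-> k ^ 2 + 1 = 0 %[mod n./2]) /\
  (in_A k (@lam n k) -> in_B k (@lam n k)) /\
  (in_A k (@tau n k) -> in_B k (@tau n k)).
Proof.
move=> Hn Hk Hk1 Hkm Hg H4.
set m := n./2 in Hkm *.
have Hnm : n = 2 * m.
  by have := odd_double_half n; rewrite (negbTE Hn) add0n -mul2n => ->.
have Hmodd : odd m.
  case: (boolP (odd m)) => // Hme; exfalso; move/negP: H4; apply.
  have := odd_double_half m; rewrite (negbTE Hme) add0n -muln2 => Em.
  rewrite Hnm -Em; apply/dvdnP; exists m./2; lia.
have Hkk : k = 2 * k./2.
  by have := odd_double_half k; rewrite (negbTE Hk) add0n -mul2n.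
have Hcop : coprime m k.
  rewrite Hkk coprimeMr coprimen2 Hmodd /=.
  move: Hg; rewrite Hnm {1}Hkk -muln_gcdr => /eqP.
  by rewrite -{2}(muln1 2) eqn_pmul2l // => /eqP.
have Hkn : k < n by lia.
have Hkn' : k <= n by apply: ltnW.
have K1 : (n - k) * k + k * k = k * n by rewrite -mulnDl subnK // mulnC.
have Hn0 : 0 < n by lia.
split; last split; last split.
- rewrite (in_A_ext k (lam_g Hkn')).
  rewrite (gmap_A Hn Hnm Hcop Hk Hkn).
  + rewrite -[X in X || _](eqn_modDr (k * k)) -[X in _ || X](eqn_modDr (k * k)).
    rewrite (_ : (n - k) * k + 1 + 1 + k * k = k * n + 2 * 1); last by lia.
    rewrite (_ : (n - k) * k + 1 + k * k = k * n + (0 + 1)); last by lia.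
    rewrite (_ : k * k + 1 + k * k = 2 * (k * k) + 1); last by lia.
    rewrite (_ : k * k + k * k = 2 * (k * k)); last by lia.
    rewrite !modnMDl eqn_modDr Hnm (two_mod m _ 1) (two_mod m 0) (eq_sym (0 %% m)) nodiv //; try lia.
    by rewrite orbF mulnn; split => /eqP.
  + by rewrite oddD oddM (negbTE Hk) andbF.
  + rewrite (_ : (n - k) * k + 1 + k * k = k * n + 1); last by lia.
    by rewrite modnMDl eqxx.
- rewrite (in_A_ext k (tau_g Hkn')).
  rewrite (gmap_A Hn Hnm Hcop Hk Hkn).
  + rewrite -[X in X || _](eqn_modDr (k * k)) -[X in _ || X](eqn_modDr (k * k + 1)).
    rewrite (_ : (n - k) * k + (n - 1) + 1 + k * k = (k + 1) * n + 2 * 0); last by lia.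
    rewrite (_ : (n - k) * k + (n - 1) + (k * k + 1) = (k + 1) * n + 2 * 0); last by lia.
    rewrite (_ : k * k + 1 + (k * k + 1) = 2 * (k * k + 1)); last by lia.
    rewrite (_ : k * k + k * k = 2 * (k * k)); last by lia.
    rewrite !modnMDl Hnm (two_mod m _ 0) (two_mod m 0) (eq_sym (0 %% m)) nodiv //; try lia.
    by rewrite /= mulnn; split => /eqP.
  + by rewrite oddD oddM (negbTE Hk) andbF oddB // (negbTE Hn).
  + apply/orP; right.
    rewrite (_ : (n - k) * k + (n - 1) + k * k + 1 = (k + 1) * n + 0); last by lia.
    by rewrite modnMDl.
- by move=> H; apply/(in_B_ext k (lam_g Hkn')); apply: gmap_B; apply/(in_A_ext k (lam_g Hkn')).
- by move=> H; apply/(in_B_ext k (tau_g Hkn')); apply: gmap_B; apply/(in_A_ext k (tau_g Hkn')).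
Qed.
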